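(* Let $\beta^*\approx1.5437$ be the real root of $x^3-2x^2+2x=2$. If $\beta\in(3/2,\beta^*]$, then $S_\beta$ has non-empty interior, and each hole of $S_\beta$ has the form $f_{\vec q_i}^n(H)$ for some $i\in\{0,1,2\}$ and some integer $n\ge0$.
   Context: $\vec q_0=(0,0)$, $\vec q_1=(1,0)$, $\vec q_2=(0,1)$, $f_{\vec q_i}(\vec z)=(\vec z+\vec q_i)/\beta$, and $S_\beta$ is the attractor of this IFS (the unique nonempty compact set with $S_\beta=\bigcup_i f_{\vec q_i}(S_\beta)$). $\Delta$ is the convex hull of $S_\beta$, the closed triangle with vertices $(0,0)$, $(\frac1{\beta-1},0)$, $(0,\frac1{\beta-1})$. $H=\Delta\setminus\bigcup_{i=0}^2 f_{\vec q_i}(\Delta)$ is the central hole, which equals $\{(x,y):x<\frac1\beta,\ y<\frac1\beta,\ x+y>\frac{1}{\beta(\beta-1)}\}$. A hole of $S_\beta$ means a connected component of $\Delta\setminus S_\beta$. *)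

(* Defs.v *)
From HB Require Import structures.
From mathcomp Require Import all_boot all_order all_algebra.
From mathcomp Require Import all_classical all_reals all_analysis.
Set Implicit Arguments. Unset Strict Implicit. Unset Printing Implicit Defensive.
Import Order.TTheory GRing.Theory Num.Theory.
Import numFieldNormedType.Exports.
Local Open Scope classical_set_scope.
Local Open Scope ring_scope.

Definition qvec {R : realType} (i : 'I_3) : R * R :=
  if val i == 0%N then (0, 0) else if val i == 1%N then (1, 0) else (0, 1).

Definition ifs_map {R : realType} (beta : R) (i : 'I_3) (z : R * R) : R * R :=
  ((z.1 + (qvec i).1) / beta, (z.2 + (qvec i).2) / beta).

Definition is_attractor {R : realType} (beta : R) (S : set (R * R)) : Prop :=
  S !=set0 /\ compact S /\ S = \bigcup_(i in [set: 'I_3]) (ifs_map beta i @` S).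

Definition Delta {R : realType} (beta : R) : set (R * R) :=
  [set z | 0 <= z.1 /\ 0 <= z.2 /\ z.1 + z.2 <= (beta - 1)^-1].

Definition central_hole {R : realType} (beta : R) : set (R * R) :=
  Delta beta `\` \bigcup_(i in [set: 'I_3]) (ifs_map beta i @` Delta beta).

Definition is_hole {R : realType} (beta : R) (S C : set (R * R)) : Prop :=
  exists2 x, (Delta beta `\` S) x & C = connected_component (Delta beta `\` S) x.

(* Main.v *)
Require Import Defs.
From HB Require Import structures.
From mathcomp Require Import all_boot all_order all_algebra.
From mathcomp Require Import all_classical all_reals all_analysis.
From mathcomp Require Import ring lra zify.
Import Order.TTheory GRing.Theory Num.Theory.
Import numFieldNormedType.Exports.
Local Open Scope classical_set_scope.
Local Open Scope ring_scope.

Section Num.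
Variable R : realType.
Variable b : R.
Hypothesis hb : 3/2 < b.
Hypothesis hp : b^+3 - 2*b^+2 + 2*b - 2 <= 0.
Ltac hh := have hb' := hb; have hp' := hp.

Lemma b_lt : b <= 8/5.
Proof.
hh.
rewrite leNgt; apply/negP => h.
have h1 : 0 < (b - 8/5) * (b^+2 - 2/5 * b + 34/25) by apply: mulr_gt0; nra.
have e : b^+3 - 2*b^+2 + 2*b - 2 = (b - 8/5) * (b^+2 - 2/5 * b + 34/25) + 22/125 by field; rewrite ?b0 ?b1.
move: hp' h1; rewrite e; set Q := (_ * _); lra.
Qed.

Lemma N1 : b * ((b-1)^-1 - 2 * b^-1) >= b^-1.
Proof.
hh.
have b1 : b - 1 != 0 by rewrite gt_eqF //; lra.
have b0 : b != 0 by rewrite gt_eqF //; lra.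
rewrite -subr_ge0.
have -> : b * ((b - 1)^-1 - 2 * b^-1) - b^-1 = (- b^+2 + b + 1) / (b * (b-1)) by field; rewrite ?b0 ?b1.
have := b_lt => hl; apply: divr_ge0; rewrite ?expr2 ?exprS ?expr1; nra.
Qed.

Lemma N2 : b * ((b-1)^-1 - 1) <= 2 * (b-1)^-1 - 3 * b^-1.
Proof.
hh.
have b1 : b - 1 != 0 by rewrite gt_eqF //; lra.
have b0 : b != 0 by rewrite gt_eqF //; lra.
rewrite -subr_ge0.
have -> : 2 * (b-1)^-1 - 3 * b^-1 - b * ((b-1)^-1 - 1) = (b^+3 - 2 * b^+2 - b + 3) / (b * (b-1)) by field; rewrite ?b0 ?b1.
have := b_lt => hl; apply: divr_ge0; rewrite ?expr2 ?exprS ?expr1; nra.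
Qed.

Lemma N3 : b^+2 * ((b-1)^-1 - 1) >= 3 * b^-1.
Proof.
hh.
have b1 : b - 1 != 0 by rewrite gt_eqF //; lra.
have b0 : b != 0 by rewrite gt_eqF //; lra.
rewrite -subr_ge0.
have -> : b^+2 * ((b-1)^-1 - 1) - 3 * b^-1 = (- b * (b^+3 - 2*b^+2 + 2*b - 2) + (2*b-3)*(b-1)) / (b * (b-1)) by field; rewrite ?b0 ?b1.
apply: divr_ge0; move: hp'; rewrite ?expr2 ?exprS ?expr1 ?expr0 ?mulr1; nra.
Qed.

Lemma N4 : b * ((b-1)^-1 - 1) >= 2 * b^-1.
Proof.
hh.
have b1 : b - 1 != 0 by rewrite gt_eqF //; lra.
have b0 : b != 0 by rewrite gt_eqF //; lra.
rewrite -subr_ge0.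
have -> : b * ((b-1)^-1 - 1) - 2 * b^-1 = (- (b^+3 - 2*b^+2 + 2*b - 2)) / (b * (b-1)) by field; rewrite ?b0 ?b1.
apply: divr_ge0; move: hp'; rewrite ?expr2 ?exprS ?expr1 ?expr0 ?mulr1; nra.
Qed.

Lemma b0 : b != 0. Proof. hh. by rewrite gt_eqF //; lra. Qed.
Lemma b1 : b - 1 != 0. Proof. hh. by rewrite gt_eqF //; lra. Qed.

Definition L := (b-1)^-1.
Definition s := b^-1.
Definition e (i : 'I_3) (z : R*R) : R :=
  if val i == 0%N then L - z.1 - z.2 else if val i == 1%N then z.1 else z.2.
Definition g (i : 'I_3) (z : R*R) : R*R :=
  (b * z.1 - (qvec i).1, b * z.2 - (qvec i).2).
Local Notation f := (ifs_map b).

Definition i0 : 'I_3 := @Ordinal 3 0 isT.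
Definition i1 : 'I_3 := @Ordinal 3 1 isT.
Definition i2 : 'I_3 := @Ordinal 3 2 isT.

Lemma ordP3 (i : 'I_3) : i = i0 \/ i = i1 \/ i = i2.
Proof.
case: i => [[|[|[|n]]] Hn].
- by left; apply/val_inj.
- by right; left; apply/val_inj.
- by right; right; apply/val_inj.
- by [].
Qed.

Ltac icase i := case: (ordP3 i) => [->|[->|->]].

Lemma e_f i j z : e j (f i z) = (e j z + (j == i)%:R) / b.
Proof.
have := b0; have := b1 => h1 h0.
icase i; icase j; rewrite /e /ifs_map /qvec /L /=; field; by rewrite ?h0 ?h1.
Qed.

Lemma e_g i j z : e j (g i z) = b * e j z - (j == i)%:R.
Proof.
have := b0; have := b1 => h1 h0.
icase i; icase j; rewrite /e /g /qvec /L /=; field; by rewrite ?h0 ?h1.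
Qed.

Lemma gf i z : g i (f i z) = z.
Proof.
have := b0 => h0; case: z => x y.
icase i; rewrite /g /ifs_map /qvec /=; congr pair; field; by rewrite ?h0.
Qed.

Lemma fg i z : f i (g i z) = z.
Proof.
have := b0 => h0; case: z => x y.
icase i; rewrite /g /ifs_map /qvec /=; congr pair; field; by rewrite ?h0.
Qed.

Lemma e_ext z w : e i1 z = e i1 w -> e i2 z = e i2 w -> z = w.
Proof. by case: z => x y; case: w => x' y'; rewrite /e /= => -> ->. Qed.

Lemma esum z : e i0 z + e i1 z + e i2 z = L.
Proof. rewrite /e /=; ring. Qed.

Lemma Delta_e z : Delta b z <-> forall j, 0 <= e j z.
Proof.
rewrite /Delta /=; split.
- move=> [h1 [h2 h3]] j; icase j; rewrite /e /L /=; lra.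
- move=> h; have := h i0; have := h i1; have := h i2; rewrite /e /L /=; lra.
Qed.

Lemma image_iter (F G : R*R -> R*R) (A : set (R*R)) n z :
  (forall z, G (F z) = z) -> (forall z, F (G z) = z) ->
  (iter n F @` A) z <-> A (iter n G z).
Proof.
move=> GF FG; elim: n z => [|n IH] z.
- split; first by move=> [w Aw <-].
  by move=> Az; exists z.
- split.
  + move=> [w Aw <-]; rewrite iterSr iterS GF; apply/IH; by exists w.
  + rewrite iterSr => /IH [w Aw hw]; exists w => //; by rewrite iterS hw FG.
Qed.

Lemma image_f i (A : set (R*R)) z : (f i @` A) z <-> A (g i z).
Proof.
split; first by move=> [w Aw <-]; rewrite gf.
by move=> h; exists (g i z) => //; rewrite fg.
Qed.

Lemma e_iter_g i j n z : j != i -> e j (iter n (g i) z) = b ^+ n * e j z.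
Proof.
move=> hji; elim: n => [|n IH] /=; first by rewrite expr0 mul1r.
by rewrite e_g (negbTE hji) IH exprS subr0 mulrA.
Qed.

Lemma Delta_g i z : Delta b z -> (Delta b (g i z) <-> s <= e i z).
Proof.
have := b0 => h0; hh.
move=> /Delta_e hz; rewrite Delta_e; split.
- move=> /(_ i); rewrite e_g eqxx /s /= => h.
  have hs : b * b^-1 = 1 by rewrite mulfV.
  have hpos : 0 < b^-1 by rewrite invr_gt0; lra.
  nra.
- move=> hs j; rewrite e_g; case: eqP => [->|_].
  + rewrite /=; have : b * s = 1 by rewrite /s mulfV.
    have := hz i => ? ?; nra.
  + have := hz j => ?; rewrite subr0; nra.
Qed.

Definition Hc (w : R*R) := (forall j, 0 <= e j w) /\ (forall j, e j w < s).

Lemma hole_char z : central_hole b z <-> Hc z.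
Proof.
rewrite /central_hole /Hc; split.
- move=> [hD hn]; have hD' := hD; move/Delta_e: hD' => hD'; split => // j.
  rewrite ltNge; apply/negP => hs; apply: hn; exists j => //.
  by apply/image_f; apply/Delta_g.
- move=> [hD hs]; have hD' : Delta b z by apply/Delta_e.
  split => // -[j _ /image_f /(Delta_g _ _ hD')]; have := hs j; lra.
Qed.

Definition Pm k n z := Hc (iter n (g k) z).

Lemma P_eq k n : iter n (f k) @` central_hole b = [set z | Pm k n z].
Proof.
apply/seteqP; split => z.
- by move/(@image_iter (f k) (g k) _ n z (gf k) (fg k)) => /hole_char.
- by move=> h; apply/(@image_iter (f k) (g k) _ n z (gf k) (fg k)); apply/hole_char.
Qed.

Lemma third j k : j != k -> exists l, [/\ l != j, l != k,
  (forall z, e j z + e k z + e l z = L) & (forall i, i = j \/ i = k \/ i = l)].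
Proof.
move=> hjk.
have H : forall z, e i0 z + e i1 z + e i2 z = L by exact: esum.
move: hjk; icase j; icase k => // _.
- exists i2; split; [by []|by []|move=> z; rewrite -(H z); ring|move=> i; icase i; auto].
- exists i1; split; [by []|by []|move=> z; rewrite -(H z); ring|move=> i; icase i; auto].
- exists i2; split; [by []|by []|move=> z; rewrite -(H z); ring|move=> i; icase i; auto].
- exists i0; split; [by []|by []|move=> z; rewrite -(H z); ring|move=> i; icase i; auto].
- exists i1; split; [by []|by []|move=> z; rewrite -(H z); ring|move=> i; icase i; auto].
- exists i0; split; [by []|by []|move=> z; rewrite -(H z); ring|move=> i; icase i; auto].
Qed.

Lemma f_Delta i z : Delta b z -> Delta b (f i z).
Proof.
hh; move=> /Delta_e h; apply/Delta_e => j; rewrite e_f.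
apply: divr_ge0; last lra.
by apply: addr_ge0 => //; rewrite ler0n.
Qed.

Lemma iter_fg k n z : iter n (f k) (iter n (g k) z) = z.
Proof. elim: n => [|n IH] //; by rewrite iterSr iterS fg IH. Qed.

Lemma F1 k n z : Pm k n z -> Delta b z.
Proof.
move=> [h _]; have : Delta b (iter n (g k) z) by apply/Delta_e.
rewrite -{2}(iter_fg k n z); elim: n {h} (iter n (g k) z) => [|n IH] w //= hw.
by apply: f_Delta; apply: IH.
Qed.
Arguments F1 {k n z}.

Lemma PmS k n z : Pm k n.+1 z <-> Pm k n (g k z).
Proof. by rewrite /Pm iterSr. Qed.

Lemma F2 k n z : Pm k n.+1 z -> s <= e k z.
Proof.
move=> h; have hz := F1 h; move/PmS/F1: h.
by move/(Delta_g _ _ hz).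
Qed.
Arguments F2 {k n z}.

Lemma F3 k n z j : Pm k n z -> j != k -> 0 <= b^+n * e j z < s.
Proof.
move=> [h1 h2] hjk; have := h1 j; have := h2 j; rewrite e_iter_g // => ? ?.
by apply/andP.
Qed.
Arguments F3 {k n z j}.

Lemma F4 k n z j l : Pm k n z -> j != k -> l != k -> j != l ->
  L - b^+n * (e j z + e l z) < s.
Proof.
move=> [h1 h2] hjk hlk hjl.
have [m [hmj hml hs hall]] := third _ _ hjl.
have hm : m = k.
  case: (hall k) => [h|[h|//]]; exfalso.
    by move: hjk; rewrite h => /negP; apply; apply/eqP.
  by move: hlk; rewrite h => /negP; apply; apply/eqP.
subst m.
have := hs (iter n (g k) z); rewrite (e_iter_g _ _ _ _ hjk) (e_iter_g _ _ _ _ hlk) => hsum.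
have := h2 k; lra.
Qed.
Arguments F4 {k n z j l}.

Lemma expr_ge1 n : 1 <= b ^+ n.
Proof. hh. apply: exprn_ege1; lra. Qed.

Lemma disj k n k' n' z : Pm k n z -> Pm k' n' z ->
  (n = 0 /\ n' = 0)%N \/ (k = k' /\ n = n').
Proof.
have H0 : forall k n k' z, Pm k 0 z -> Pm k' n.+1 z -> False.
  move=> k1 n1 k1' z1 [_ h] /F2; have := h k1'; lra.
move=> hP hP'.
case: n hP => [|n] hP; case: n' hP' => [|n'] hP'.
- by left.
- by exfalso; apply: (H0 _ _ _ _ hP hP').
- by exfalso; apply: (H0 _ _ _ _ hP' hP).
- right; case: (eqVneq k k') => [hk|hkk]; last first.
    exfalso; have h1 := F2 hP; have := F3 hP' hkk => /andP[h2 h3].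
    have h4 := expr_ge1 n'.+1.
    have hs0 : 0 < s by rewrite /s invr_gt0; have := hb; lra.
    set t := b ^+ n'.+1 in h2 h3 h4.
    have : t * e k z >= e k z by rewrite ler_peMl //; lra.
    lra.
  subst k'; split => //; congr S.
  case: (ltngtP n n') => // hlt; exfalso.
  + have : Pm k (n'.+1 - n.+1) (iter n.+1 (g k) z).
      by move: hP'; rewrite /Pm -iterD subnK //; lia.
    have hm : (0 < n'.+1 - n.+1)%N by lia.
    case: (n'.+1 - n.+1)%N hm => [|m] // _.
    by move/(H0 k _ k _ hP).
  + have : Pm k (n.+1 - n'.+1) (iter n'.+1 (g k) z).
      by move: hP; rewrite /Pm -iterD subnK //; lia.
    have hm : (0 < n.+1 - n'.+1)%N by lia.
    case: (n.+1 - n'.+1)%N hm => [|m] // _.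
    by move/(H0 k _ k _ hP').
Qed.

Lemma powle n m : (n <= m)%N -> b ^+ n <= b ^+ m.
Proof. hh. move=> h; apply: ler_weXn2l => //; lra. Qed.

Lemma pow_gt0 n : 0 < b ^+ n.
Proof. hh. apply: exprn_gt0; lra. Qed.

Lemma core (n m : nat) (wj wl : R) :
 (0 < n)%N -> (0 < m)%N ->
 0 <= b^+n * wj < s -> 0 <= b^+n * wl < s -> L - b^+n * (wj + wl) < s ->
 0 <= b^+m * (L - 1 - wj - wl) < s -> 0 <= b^+m * wl < s ->
 L - b^+m * ((L - 1 - wj - wl) + wl) < s -> False.
Proof.
hh. move=> hn hm /andP[hx0 hx1] /andP[hy0 hy1] hxy /andP[hu0 hu1] /andP[hv0 hv1] huv.
have n1 := N1; have n2 := N2; have n3 := N3; have n4 := N4.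
rewrite -/L -/s in n1 n2 n3 n4.
have tp := pow_gt0 n; have tp' := pow_gt0 m.
have wl0 : 0 <= wl.
  by rewrite -(pmulr_rge0 _ tp).
have hX : b ^+ n * wj > L - 2 * s by move: hxy; rewrite mulrDr; lra.
have hY : b ^+ n * wl > L - 2 * s by move: hxy; rewrite mulrDr; lra.
have hV : b ^+ m * wl > L - 2 * s by move: huv; rewrite mulrDr; lra.
case: (ltngtP n m) => hnm.
- have h1 : b ^+ m >= b * b ^+ n by rewrite -exprS; apply: powle.
  have h2 : b ^+ m * wl >= b * (b ^+ n * wl) by rewrite mulrA; apply: ler_wpM2r.
  have h3 : b * (b ^+ n * wl) > b * (L - 2 * s) by rewrite ltr_pM2l //; lra.
  lra.
- have h1 : b ^+ n >= b * b ^+ m by rewrite -exprS; apply: powle.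
  have h2 : b ^+ n * wl >= b * (b ^+ m * wl) by rewrite mulrA; apply: ler_wpM2r.
  have h3 : b * (b ^+ m * wl) > b * (L - 2 * s) by rewrite ltr_pM2l //; lra.
  lra.
- subst m.
  clear tp'; case: n hn {hm} tp hx0 hx1 hy0 hy1 hxy hu0 hu1 hv0 hv1 huv hX hY hV => [//|[|n]] _ tp hx0 hx1 hy0 hy1 hxy hu0 hu1 hv0 hv1 huv hX hY hV.
  + rewrite expr1 in hx0 hx1 hy0 hy1 hxy hu0 hu1 hv0 hv1 huv hX hY hV tp.
    move: huv; rewrite (_ : b * (L - 1 - wj - wl + wl) = b * (L - 1) - b * wj); last by ring.
    lra.
  + have h1 : b ^+ n.+2 >= b ^+ 2 by apply: powle.
    have hs0 : 0 < s by rewrite /s invr_gt0; lra.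
    have hL1 : L - 1 >= 0 by nra.
    have h2 : b ^+ n.+2 * (L - 1) >= b ^+ 2 * (L - 1) by apply: ler_wpM2r.
    move: hu1; rewrite (_ : b ^+ n.+2 * (L - 1 - wj - wl) = b ^+ n.+2 * (L - 1) - b ^+ n.+2 * wj - b ^+ n.+2 * wl); last by ring.
    lra.
Qed.

Definition Hole z := exists k n, Pm k n z.
Definition Gs z := Delta b z /\ ~ Hole z.

Lemma s_pos : 0 < s. Proof. hh. rewrite /s invr_gt0; lra. Qed.
Lemma s_lt1 : s < 1. Proof. hh. rewrite /s invf_lt1; lra. Qed.

Lemma step z : Gs z -> exists j, Gs (g j z).
Proof.
hh. have hs0 := s_pos; have hs1 := s_lt1.
move=> [hD hH].
have [j hj] : exists j, s <= e j z.
  case: (lerP s (e i0 z)) => h0; first by exists i0.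
  case: (lerP s (e i1 z)) => h1; first by exists i1.
  case: (lerP s (e i2 z)) => h2; first by exists i2.
  exfalso; apply: hH; exists i0, 0%N; split; first by apply/Delta_e.
  by move=> i /=; icase i.
have hDg : Delta b (g j z) by apply/Delta_g.
case: (pselect (Hole (g j z))) => hHg; last by exists j.
move: hHg => [k [n hP]].
case: n hP => [|n] hP.
  by exfalso; apply: hH; exists j, 1%N; apply/PmS.
case: (eqVneq j k) => [hjk|hjk].
  by subst k; exfalso; apply: hH; exists j, n.+2; apply/PmS.
exists k.
have [l [hlj hlk hsum hall]] := third _ _ hjk.
set w := g j z; set u := g k z.
have ejw : e j w = b * e j z - 1 by rewrite /w e_g eqxx.
have elw : e l w = b * e l z by rewrite /w e_g (negbTE hlj) subr0.
have eju : e j u = b * e j z by rewrite /u e_g (negbTE hjk) subr0.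
have elu : e l u = b * e l z by rewrite /u e_g (negbTE hlk) subr0.
have hsu := hsum u.
have hkj : k != j by rewrite eq_sym.
have hlj' : j != l by rewrite eq_sym.
have hkl : k != l by rewrite eq_sym.
have /andP[hx0 hx1] := F3 (j := j) hP hjk.
have /andP[hy0 hy1] := F3 (j := l) hP hlk.
have hxy := F4 hP hjk hlk hlj'.
have tp := pow_gt0 n.+1.
have tb : b ^+ n.+1 >= b by rewrite -{1}(expr1 b); apply: powle.
have n4 := N4; rewrite -/L -/s in n4.
have wl0 : 0 <= e l w by rewrite -(pmulr_rge0 _ tp).
have wj0 : 0 <= e j w by rewrite -(pmulr_rge0 _ tp).
have hsmall : e j w + e l w < L - 1.
  have h1 : b ^+ n.+1 * (L - 1) >= b * (L - 1) by apply: ler_wpM2r; nra.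
  have h2 : b ^+ n.+1 * (L - 1 - (e j w + e l w)) > 0 by rewrite mulrBr mulrDr; lra.
  by move: h2; rewrite pmulr_rgt0 // subr_gt0.
split.
- apply/Delta_e => i; case: (hall i) => [->|[->|->]]; lra.
- move=> [i [m hPu]].
  case: m hPu => [|m] hPu.
    by move: hPu => [_ /(_ j)]; lra.
  case: (eqVneq j i) => [hji|hji]; last first.
    have /andP[_ h] := F3 (j := j) hPu hji.
    have := expr_ge1 m.+1 => hge.
    have : b ^+ m.+1 * e j u >= e j u by rewrite ler_peMl //; lra.
    lra.
  subst i.
  have /andP[hu0 hu1] := F3 (j := k) hPu hkj.
  have /andP[hv0 hv1] := F3 (j := l) hPu hlj.
  have huv := F4 hPu hkj hlj hkl.
  have eku : e k u = L - 1 - e j w - e l w by lra.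
  rewrite eku elu -elw in hu0 hu1 hv0 hv1 huv.
  by apply: (@core n.+1 m.+1 (e j w) (e l w) isT isT _ _ hxy _ _ huv); apply/andP.
Qed.

Lemma bern m : 1 + m%:R * (b - 1) <= b ^+ m.
Proof.
hh. elim: m => [|m IH]; first by rewrite expr0 mul0r addr0.
rewrite exprS -natr1.
have : 1 <= b ^+ m := expr_ge1 m.
nra.
Qed.

Lemma small K eps : 0 <= K -> 0 < eps -> exists m, K / b ^+ m < eps.
Proof.
hh. move=> hK he.
set x := K / (eps * (b - 1)).
have hx := truncnS_gt x.
exists (Num.Def.trunc x).+1.
have hb1 : 0 < b - 1 by lra.
have hbm := bern (Num.Def.trunc x).+1.
set m := (Num.Def.trunc x).+1 in hx hbm *.
have hp0 : 0 < b ^+ m := pow_gt0 m.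
rewrite ltr_pdivrMr //.
have : K = x * (eps * (b - 1)) by rewrite /x mulfVK // mulf_neq0 // gt_eqF.
move=> ->.
have h1 : x * (eps * (b - 1)) < m%:R * (eps * (b - 1)) by rewrite ltr_pM2r // mulr_gt0.
nra.
Qed.

Lemma e_lip j z w : `|e j z - e j w| <= `|z.1 - w.1| + `|z.2 - w.2|.
Proof.
icase j; rewrite /e /=.
- rewrite (_ : L - z.1 - z.2 - (L - w.1 - w.2) = (w.1 - z.1) + (w.2 - z.2)); last by ring.
  rewrite (distrC z.1) (distrC z.2); exact: ler_normD.
- by rewrite lerDl normr_ge0.
- by rewrite lerDr normr_ge0.
Qed.

Lemma approx (A B : set (R*R)) (a0 : R*R) (M : R) :
  A a0 -> (forall i a, A a -> A (f i a)) ->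
  (forall z, B z -> exists j, B (g j z)) ->
  (forall z, B z -> `|z.1| <= M /\ `|z.2| <= M) ->
  forall m z, B z -> exists a, A a /\
    `|z.1 - a.1| <= (M + `|a0.1| + `|a0.2|) / b ^+ m /\
    `|z.2 - a.2| <= (M + `|a0.1| + `|a0.2|) / b ^+ m.
Proof.
hh. move=> Aa0 Af Bg BM m; elim: m => [|m IH] z Bz.
- exists a0; split => //; rewrite expr0 divr1.
  have [h1 h2] := BM z Bz.
  have := ler_normB z.1 a0.1; have := ler_normB z.2 a0.2.
  have := normr_ge0 a0.1; have := normr_ge0 a0.2; lra.
- have [j Bj] := Bg z Bz.
  have [a [Aa [h1 h2]]] := IH _ Bj.
  exists (f j a); split; first exact: Af.
  have hb0 : 0 < b by lra.
  have hbn : b != 0 by rewrite gt_eqF.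
  have hbi : 0 < b^-1 by rewrite invr_gt0.
  have e1 : z.1 - (f j a).1 = ((g j z).1 - a.1) * b^-1 by rewrite /g /ifs_map /=; field.
  have e2 : z.2 - (f j a).2 = ((g j z).2 - a.2) * b^-1 by rewrite /g /ifs_map /=; field.
  rewrite e1 e2 !normrM (gtr0_norm hbi) exprSr invfM mulrA.
  by split; rewrite ler_pM2r.
Qed.

Lemma ballP (z w : R*R) ep : ball z ep w <-> (`|z.1 - w.1| < ep /\ `|z.2 - w.2| < ep).
Proof. by rewrite /ball /= /prod_ball /ball /=. Qed.

Lemma attr_g {S} : is_attractor b S -> forall z, S z -> exists j, S (g j z).
Proof.
move=> [_ [_ hS]] z; rewrite {1}hS => -[i _ [w Sw <-]].
by exists i; rewrite gf.
Qed.

Lemma attr_f {S} : is_attractor b S -> forall i w, S w -> S (f i w).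
Proof.
move=> [_ [_ hS]] i w Sw; rewrite hS; exists i => //; by exists w.
Qed.

Lemma S_bnd {S} : is_attractor b S -> exists M : R, forall z, S z -> `|z.1| <= M /\ `|z.2| <= M.
Proof.
move=> [_ [hc _]]; move/compact_bounded: hc => [M0 [_ H]].
have := H (M0 + 1) ltac:(lra).
move=> H2; exists (M0+1) => z Sz; have := H2 z Sz.
rewrite /= prod_normE /= ge_max. by move/andP.
Qed.

Lemma S_Delta {S} : is_attractor b S -> S `<=` Delta b.
Proof.
hh. move=> hS; have [M hM] := S_bnd hS.
move=> z Sz; apply/Delta_e => j; rewrite leNgt; apply/negP => hneg.
have hM0 : 0 <= M by have [h _] := hM z Sz; have := normr_ge0 z.1; lra.
have hK : 0 <= M + `|(0:R*R).1| + `|(0:R*R).2| by rewrite /= normr0 !addr0.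
have hep : 0 < - e j z / 2 by lra.
have [m hm] := small _ _ hK hep.
have Da0 : Delta b (0 : R*R) by rewrite /Delta /= addr0 /L invr_ge0; split; [by []|split; [by []|lra]].
have [a [Aa [h1 h2]]] := @approx (Delta b) S 0 M Da0 (fun i a h => f_Delta i a h) (attr_g hS) hM m z Sz.
have := e_lip j z a; move/Delta_e: Aa => /(_ j) ha.
move: h1 h2 hm; set K := (_ / _); move=> h1 h2 hm h3.
have h4 := ler_norm (e j z - e j a).
rewrite -normrN opprB in h3.
have h5 := ler_norm (e j a - e j z).
lra.
Qed.

Lemma hole_notS {S} : is_attractor b S -> forall k n z, Pm k n z -> ~ S z.
Proof.
hh. move=> hS k n; elim: n => [|n IH] z hP Sz.
- have [i Si] := attr_g hS _ Sz.
  have hD := S_Delta hS _ Sz; have := S_Delta hS _ Si.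
  move/(Delta_g _ _ hD); move: hP => [_ /(_ i)]; lra.
- have [i Si] := attr_g hS _ Sz.
  case: (eqVneq i k) => [hik|hik].
    by subst i; apply: (IH (g k z)) => //; apply/PmS.
  have hD := F1 hP; have := S_Delta hS _ Si; move/(Delta_g _ _ hD) => h1.
  have /andP[h2 h3] := F3 hP hik.
  have hs0 := s_pos.
  have h4 := expr_ge1 n.+1.
  have : b ^+ n.+1 * e i z >= e i z by rewrite ler_peMl //; lra.
  lra.
Qed.

Lemma Gs_Delta z : Gs z -> `|z.1| <= L /\ `|z.2| <= L.
Proof.
move=> [[h1 [h2 h3]] _]; rewrite !ger0_norm // /L; split; lra.
Qed.

Lemma G_sub {S} : is_attractor b S -> Gs `<=` S.
Proof.
hh. move=> hS; have hS' := hS; move: hS' => [[s0 Ss0] [hc _]].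
have cS : closed S by apply: compact_closed => //; apply: norm_hausdorff.
move=> z Gz; apply: cS => N /nbhs_ballP [ep /= hep hball].
have hK : 0 <= L + `|s0.1| + `|s0.2|.
  have : 0 <= L by rewrite /L invr_ge0; lra.
  have := normr_ge0 s0.1; have := normr_ge0 s0.2; lra.
have [m hm] := small _ _ hK hep.
have [a [Sa [h1 h2]]] := @approx S Gs s0 L Ss0 (attr_f hS) step Gs_Delta m z Gz.
exists a; split => //; apply: hball; apply/ballP; split; lra.
Qed.

Lemma open_lip (phi : R*R -> R) (C a : R) : 0 < C ->
  (forall z w, `|phi z - phi w| <= C * (`|z.1 - w.1| + `|z.2 - w.2|)) ->
  open [set z | phi z < a].
Proof.
move=> hC hphi; rewrite openE => z /= hz.
apply/nbhs_ballP; exists ((a - phi z) / (2 * C)) => /=.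
  by apply: divr_gt0; [lra|lra].
move=> w /ballP [h1 h2] /=.
have := hphi w z; rewrite (distrC w.1) (distrC w.2) => h3.
have h4 := ler_norm (phi w - phi z).
have h5 : C * (`|z.1 - w.1| + `|z.2 - w.2|) < C * (2 * ((a - phi z) / (2 * C))).
  by rewrite ltr_pM2l //; lra.
have h6 : C * (2 * ((a - phi z) / (2 * C))) = a - phi z.
  by field; rewrite gt_eqF.
lra.
Qed.

Lemma iter_g_diff k n z w :
  ((iter n (g k) z).1 - (iter n (g k) w).1 = b ^+ n * (z.1 - w.1)) /\
  ((iter n (g k) z).2 - (iter n (g k) w).2 = b ^+ n * (z.2 - w.2)).
Proof.
elim: n => [|n [IH1 IH2]] /=; first by rewrite !expr0 !mul1r.
rewrite /g /= exprS; split.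
- by rewrite -mulrA -IH1; ring.
- by rewrite -mulrA -IH2; ring.
Qed.

Lemma Hc_lt w : Hc w <-> forall j, e j w < s.
Proof.
hh; split; first by case.
move=> h; split => // j.
have n1 := N1; rewrite -/L -/s in n1.
have hs0 := s_pos.
have hL : L - 2 * s > 0 by nra.
have := esum w; have := h i0; have := h i1; have := h i2.
icase j; lra.
Qed.

Lemma P_open k n : open [set z | Pm k n z].
Proof.
have hl : forall j, open [set z | e j (iter n (g k) z) < s].
  move=> j; apply: (@open_lip _ (b ^+ n)); first exact: pow_gt0.
  move=> z w; have [h1 h2] := iter_g_diff k n z w.
  apply: le_trans (e_lip _ _ _) _.
  rewrite h1 h2 !normrM (gtr0_norm (pow_gt0 n)) mulrDr //.
have -> : [set z | Pm k n z] = [set z | e i0 (iter n (g k) z) < s] `&`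
   [set z | e i1 (iter n (g k) z) < s] `&` [set z | e i2 (iter n (g k) z) < s].
  apply/seteqP; split => z /=.
  - by move/Hc_lt => h; split; [split|]; apply: h.
  - move=> [[h0 h1] h2]; apply/Hc_lt => j; by icase j.
by apply: openI; [apply: openI|]; apply: hl.
Qed.

Definition seg (z w : R*R) (l : R) : R*R :=
  (z.1 + l * (w.1 - z.1), z.2 + l * (w.2 - z.2)).

Lemma segE z w : seg z w = fun l => z + l *: (w - z).
Proof. by apply: funext => l; rewrite /seg. Qed.

Lemma seg_cont z w : continuous (seg z w).
Proof.
rewrite segE => l.
apply: cvgD; first exact: cvg_cst.
apply: cvgZr_tmp; exact: cvg_id.
Qed.

Lemma convex_conn (C : set (R*R)) :
  (forall z w l, C z -> C w -> 0 <= l <= 1 -> C (seg z w l)) -> connected C.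
Proof.
move=> hC.
case: (pselect (C !=set0)) => [[x0 Cx0]|h]; last first.
  have -> : C = set0 by apply/seteqP; split => // z Cz; exfalso; apply: h; exists z.
  exact: connected0.
have -> : C = \bigcup_(w in C) (seg x0 w @` `[0, 1]).
  apply/seteqP; split => z.
  - move=> Cz; exists z => //; exists 1; first by rewrite /= in_itv /= lexx ler01.
    by case: z {Cz} => z1 z2; rewrite /seg /=; congr pair; ring.
  - by move=> [w Cw [l hl <-]]; apply: hC => //.
apply: bigcup_connected.
  exists x0 => w Cw; exists 0; first by rewrite /= in_itv /= lexx ler01.
  by case: x0 {Cx0} => z1 z2; rewrite /seg /=; congr pair; ring.
move=> w Cw; apply: connected_continuous_connected; first exact: segment_connected.
apply: continuous_subspaceT; exact: seg_cont.
Qed.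

Lemma g_seg k z w l : g k (seg z w l) = seg (g k z) (g k w) l.
Proof. by rewrite /g /seg /=; congr pair; ring. Qed.

Lemma iter_seg k n z w l :
  iter n (g k) (seg z w l) = seg (iter n (g k) z) (iter n (g k) w) l.
Proof. elim: n => [|n IH] //; by rewrite !iterS IH g_seg. Qed.

Lemma e_seg j z w l : e j (seg z w l) = e j z + l * (e j w - e j z).
Proof. icase j; rewrite /e /seg /=; ring. Qed.

Lemma Hc_seg z w l : Hc z -> Hc w -> 0 <= l <= 1 -> Hc (seg z w l).
Proof.
move=> [hz0 hz1] [hw0 hw1] /andP[l0 l1]; split => j; rewrite e_seg.
- have := hz0 j; have := hw0 j => a c.
  have : 0 <= l * e j w by apply: mulr_ge0.
  have : 0 <= (1 - l) * e j z by apply: mulr_ge0; lra.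
  lra.
- have := hz1 j; have := hw1 j => a c.
  case: (lerP (e j z) (e j w)) => h.
  + have : l * (e j w - e j z) <= 1 * (e j w - e j z) by apply: ler_wpM2r; lra.
    lra.
  + have : l * (e j w - e j z) <= 0 by apply: mulr_ge0_le0; lra.
    lra.
Qed.

Lemma P_conn k n : connected [set z | Pm k n z].
Proof.
apply: convex_conn => z w l hz hw hl; rewrite /= /Pm iter_seg.
exact: Hc_seg.
Qed.

Lemma sep_open (A B : set (R*R)) : open A -> open B ->
  (forall z, A z -> B z -> False) -> separated A B.
Proof.
move=> oA oB hAB; split; apply/seteqP; split => // z [].
- move=> cA Bz; have := cA B; case.
    by apply: open_nbhs_nbhs; split.
  by move=> y [Ay By]; apply: (hAB y).
- move=> Az cB; have := cB A; case.
    by apply: open_nbhs_nbhs; split.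
  by move=> y [By Ay]; apply: (hAB y).
Qed.

Lemma D_Hole {S} : is_attractor b S -> forall z, (Delta b `\` S) z -> Hole z.
Proof.
move=> hS z [hD hnS]; apply: contrapT => hH; apply: hnS.
by apply: (G_sub hS).
Qed.

Lemma P_D {S} : is_attractor b S -> forall k n z, Pm k n z -> (Delta b `\` S) z.
Proof. move=> hS k n z h; split; [exact: F1 h|exact: hole_notS hS k n z h]. Qed.

Lemma main_holes {S} : is_attractor b S -> forall C, is_hole b S C ->
  exists i n, C = iter n (f i) @` central_hole b.
Proof.
move=> hS C [x hx ->].
have [k [n hPx]] := D_Hole hS _ hx.
exists k, n; rewrite P_eq.
set P := [set z | Pm k n z].
set Q := [set z | exists k' n', Pm k' n' z /\ ~ (exists y, Pm k' n' y /\ Pm k n y)].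
apply/seteqP; split; last first.
  apply: connected_component_max => //; first by move=> z; apply: P_D hS k n z.
  exact: P_conn.
have oQ : open Q.
  rewrite openE => z [k' [n' [hz hn]]].
  have : nbhs z [set y | Pm k' n' y] by apply: open_nbhs_nbhs; split => //; apply: P_open.
  apply: filterS => y hy; by exists k', n'.
have hPQ : forall z, P z -> Q z -> False.
  by move=> z Pz [k' [n' [hz hn]]]; apply: hn; exists z.
have sep := @sep_open P Q (P_open k n) oQ hPQ.
have hsub : connected_component (Delta b `\` S) x `<=` P `|` Q.
  move=> z /connected_component_sub /(D_Hole hS) [k' [n' hz]].
  case: (pselect (exists y, Pm k' n' y /\ Pm k n y)) => [[y [h1 h2]]|hn]; last first.
    by right; exists k', n'.
  left; case: (disj _ _ _ _ _ h1 h2) => [[hn1 hn2]|[hk hn]]; rewrite /P /=; [by rewrite hn2; move: hz; rewrite hn1|by subst].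
case: (connected_subset sep hsub (@component_connected _ _ _)) => // hQ.
exfalso; apply: (hPQ x hPx); apply: hQ; exact: connected_component_refl.
Qed.

Lemma main_interior {S} : is_attractor b S -> interior S !=set0.
Proof.
hh. move=> hS.
have hs0 := s_pos.
have n1 := N1; rewrite -/L -/s in n1.
have hL : L - 2 * s > 0 by nra.
set U := [set z | - e i0 z < - s] `&` [set z | - e i1 z < - s] `&` [set z | - e i2 z < 0].
have lipN : forall j z w, `|- e j z - - e j w| <= 1 * (`|z.1 - w.1| + `|z.2 - w.2|).
  by move=> j z w; rewrite mul1r -opprD normrN; apply: e_lip.
have oU : open U.
  by apply: openI; [apply: openI|]; apply: (@open_lip _ 1) => //; apply: lipN.
set d := (L - 2 * s) / 4.
have hd : d > 0 by rewrite /d; lra.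
have hL4 : L = 4 * d + 2 * s by rewrite /d; field.
exists (s + d, d).
have Uz : U (s + d, d) by rewrite /U /e /=; split; [split|]; lra.
have : nbhs (s + d, d) U by apply: open_nbhs_nbhs; split.
apply: filterS => z [[/= h0 /= h1] /= h2].
apply: (G_sub hS); split.
  apply/Delta_e => j; move: h0 h1 h2 => /= h0 h1 h2; icase j; lra.
move=> [k [n hP]].
case: n hP => [|n] hP.
  by move: hP => [_ /(_ i0)]; lra.
have hge := expr_ge1 n.+1.
have key : forall j, j != k -> e j z < s.
  move=> j hj; have /andP[a c] := F3 hP hj.
  have ej0 : 0 <= e j z by move/F1/Delta_e: hP => /(_ j).
  have : b ^+ n.+1 * e j z >= e j z by rewrite ler_peMl //; lra.
  lra.
case: (eqVneq i0 k) => [hk|hk]; last by have := key _ hk; lra.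
have : i1 != k by rewrite -hk.
by move/key; lra.
Qed.

Lemma main_sec {S} : is_attractor b S ->
  interior S !=set0 /\
  (forall C, is_hole b S C ->
     exists (i : 'I_3) (n : nat), C = (iter n (ifs_map b i)) @` (central_hole b)).
Proof. by move=> hS; split; [apply: main_interior|apply: main_holes]. Qed.
End Num.

Theorem proposition6p2 (R : realType) (betastar beta : R) (S : set (R * R)) :
  betastar ^+ 3 - 2 * betastar ^+ 2 + 2 * betastar = 2 ->
  3 / 2 < beta -> beta <= betastar ->
  is_attractor beta S ->
  interior S !=set0 /\
  (forall C, is_hole beta S C ->
     exists (i : 'I_3) (n : nat), C = (iter n (ifs_map beta i)) @` (central_hole beta)).
Proof.
move=> hstar hb hle hS.
have hp : beta ^+ 3 - 2 * beta ^+ 2 + 2 * beta - 2 <= 0.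
  move: hstar hle hb; set x := betastar; set y := beta => hstar hle hb.
  have hQ : 0 < x ^+ 2 + x * y + y ^+ 2 - 2 * x - 2 * y + 2.
    have -> : x ^+ 2 + x * y + y ^+ 2 - 2 * x - 2 * y + 2 =
      3/4 * (x + y - 4/3) ^+ 2 + 2/3 + (x - y) ^+ 2 / 4 by field.
    have := sqr_ge0 (x + y - 4/3); have := sqr_ge0 (x - y); lra.
  have h0 : 0 <= (x - y) * (x ^+ 2 + x * y + y ^+ 2 - 2 * x - 2 * y + 2).
    by apply: mulr_ge0; [lra|apply: ltW].
  have -> : y ^+ 3 - 2 * y ^+ 2 + 2 * y - 2 =
    (x ^+ 3 - 2 * x ^+ 2 + 2 * x - 2) - (x - y) * (x ^+ 2 + x * y + y ^+ 2 - 2 * x - 2 * y + 2) by ring.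
  move: h0; set Q := (_ * _); rewrite hstar; lra.
exact: (@main_sec R beta hb hp S hS).
Qed.
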